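(* Assume $\gamma=0$, $L$ is conformal, and $s$ is not a root of unity. If $M$ is a simple $L$-module with $HM=M$ and $hM=0$, then $\operatorname{ann}M=\langle h\rangle$.
   Context: Let $r,s\in\mathbb C^\times$, $\phi\in\mathbb C[x]$, and $L=L(\phi,r,s,0)$ the associative $\mathbb C$-algebra generated by $u,d,h$ with $hu=ruh$, $dh=rhd$, $du-sud=\phi(h)$. $L$ is conformal if there is $\psi\in\mathbb C[x]$ with $s\psi(x)-\psi(rx)=\phi(x)$; fix such $\psi$ and set $H=ud+\psi(h)$, so $Hu=suH$, $dH=sHd$. Modules are left modules; $\langle\cdots\rangle$ denotes a two-sided ideal. *)

(* Defs.v *)
(* The ground field C is modelled by an arbitrary
   numClosedFieldType K (algebraically closed, characteristic 0). *)
From HB Require Import structures.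
From mathcomp Require Import all_boot all_order all_algebra.
Set Implicit Arguments. Unset Strict Implicit. Unset Printing Implicit Defensive.
Import Order.TTheory GRing.Theory Num.Theory.
Local Open Scope ring_scope.

(* Syntactic terms of the free associative K-algebra on u, d, h. *)
Inductive term (K : Type) : Type :=
  | Tu | Td | Th
  | Tc of K
  | Tadd of term K & term K
  | Tmul of term K & term K.
Arguments Tu {K}. Arguments Td {K}. Arguments Th {K}.

Section Terms.
Variable K : numClosedFieldType.

Definition tsub (a b : term K) : term K := Tadd a (Tmul (Tc (-1)) b).
Definition tpow (t : term K) (n : nat) : term K := iter n (Tmul t) (Tc 1).
Definition tpoly (p : {poly K}) : term K :=
  foldr (fun i acc => Tadd (Tmul (Tc p`_i) (tpow Th i)) acc) (Tc 0)
        (iota 0 (size p)).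

(* defining relations of L = L(phi, r, s, 0) *)
Definition rel_hu (r : K) : term K := tsub (Tmul Th Tu) (Tmul (Tc r) (Tmul Tu Th)).
Definition rel_dh (r : K) : term K := tsub (Tmul Td Th) (Tmul (Tc r) (Tmul Th Td)).
Definition rel_du (s : K) (phi : {poly K}) : term K :=
  tsub (tsub (Tmul Td Tu) (Tmul (Tc s) (Tmul Tu Td))) (tpoly phi).

(* Equality in L: congruence on terms generated by the axioms of an
   associative unital K-algebra and the defining relations of L. *)
Inductive eqvL (r s : K) (phi : {poly K}) : term K -> term K -> Prop :=
  | eqv_refl a : eqvL r s phi a a
  | eqv_sym a b : eqvL r s phi a b -> eqvL r s phi b a
  | eqv_trans a b c : eqvL r s phi a b -> eqvL r s phi b c -> eqvL r s phi a c
  | eqv_add a a' b b' : eqvL r s phi a a' -> eqvL r s phi b b' ->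
      eqvL r s phi (Tadd a b) (Tadd a' b')
  | eqv_mul a a' b b' : eqvL r s phi a a' -> eqvL r s phi b b' ->
      eqvL r s phi (Tmul a b) (Tmul a' b')
  | eqv_addA a b c : eqvL r s phi (Tadd a (Tadd b c)) (Tadd (Tadd a b) c)
  | eqv_addC a b : eqvL r s phi (Tadd a b) (Tadd b a)
  | eqv_add0 a : eqvL r s phi (Tadd (Tc 0) a) a
  | eqv_addN a : eqvL r s phi (tsub a a) (Tc 0)
  | eqv_mulA a b c : eqvL r s phi (Tmul a (Tmul b c)) (Tmul (Tmul a b) c)
  | eqv_mul1l a : eqvL r s phi (Tmul (Tc 1) a) a
  | eqv_mul1r a : eqvL r s phi (Tmul a (Tc 1)) a
  | eqv_mul0l a : eqvL r s phi (Tmul (Tc 0) a) (Tc 0)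
  | eqv_mulDl a b c : eqvL r s phi (Tmul (Tadd a b) c) (Tadd (Tmul a c) (Tmul b c))
  | eqv_mulDr a b c : eqvL r s phi (Tmul a (Tadd b c)) (Tadd (Tmul a b) (Tmul a c))
  | eqv_cadd x y : eqvL r s phi (Tadd (Tc x) (Tc y)) (Tc (x + y))
  | eqv_cmul x y : eqvL r s phi (Tmul (Tc x) (Tc y)) (Tc (x * y))
  | eqv_ccomm x a : eqvL r s phi (Tmul (Tc x) a) (Tmul a (Tc x))
  | eqv_rel_hu : eqvL r s phi (rel_hu r) (Tc 0)
  | eqv_rel_dh : eqvL r s phi (rel_dh r) (Tc 0)
  | eqv_rel_du : eqvL r s phi (rel_du s phi) (Tc 0).

Definition in_ideal_h (r s : K) (phi : {poly K}) (t : term K) : Prop :=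
  exists l : seq (term K * term K),
    eqvL r s phi t
      (foldr (fun p acc => Tadd (Tmul (Tmul p.1 Th) p.2) acc) (Tc 0) l).

Definition conformal_poly (r s : K) (phi psi : {poly K}) : Prop :=
  s *: psi - psi \Po (r *: 'X) = phi.

Definition Hterm (psi : {poly K}) : term K := Tadd (Tmul Tu Td) (tpoly psi).

Section Module.
Variable M : lmodType K.
Variables (U D H : M -> M).

Fixpoint act (t : term K) (m : M) : M :=
  match t with
  | Tu => U m | Td => D m | Th => H m
  | Tc c => c *: m
  | Tadd a b => act a m + act b m
  | Tmul a b => act a (act b m)
  end.

Definition is_Lmodule (r s : K) (phi : {poly K}) : Prop :=
  [/\ (linear U /\ linear D /\ linear H),
      (forall m, act (rel_hu r) m = 0),
      (forall m, act (rel_dh r) m = 0) &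
      (forall m, act (rel_du s phi) m = 0)].

Definition is_submodule (P : M -> Prop) : Prop :=
  [/\ P 0, (forall m n, P m -> P n -> P (m + n)) /\
      (forall (c : K) m, P m -> P (c *: m)),
      (forall m, P m -> P (U m)), (forall m, P m -> P (D m)) &
      (forall m, P m -> P (H m))].

Definition is_simple : Prop :=
  (exists m : M, m <> 0) /\
  forall P, is_submodule P -> (forall m, P m -> m = 0) \/ (forall m, P m).

Definition in_ann (t : term K) : Prop := forall m, act t m = 0.

End Module.
End Terms.

(* Main.v *)
Require Import Defs.
From HB Require Import structures.
From mathcomp Require Import all_boot all_order all_algebra.
From Stdlib Require Import Setoid Morphisms Classical.
Set Implicit Arguments. Unset Strict Implicit. Unset Printing Implicit Defensive.
Import Order.TTheory GRing.Theory Num.Theory.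
Local Open Scope ring_scope.

Section Syn.
Variable K : numClosedFieldType.
Variables (r s : K) (phi : {poly K}).

Local Notation "a === b" := (eqvL r s phi a b) (at level 70).

Definition isum (l : seq (term K * term K)) : term K :=
  foldr (fun p acc => Tadd (Tmul (Tmul p.1 Th) p.2) acc) (Tc 0) l.

Definition eqI (a b : term K) : Prop := exists l, a === Tadd b (isum l).
Local Notation "a ~= b" := (eqI a b) (at level 70).

Instance eqv_Equiv : Equivalence (eqvL r s phi).
Proof. split; [exact: eqv_refl | exact: eqv_sym | exact: eqv_trans]. Qed.
Instance Tadd_eqv : Proper (eqvL r s phi ==> eqvL r s phi ==> eqvL r s phi) (@Tadd K).
Proof. by move=> ? ? ? ? ? ?; apply: eqv_add. Qed.
Instance Tmul_eqv : Proper (eqvL r s phi ==> eqvL r s phi ==> eqvL r s phi) (@Tmul K).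
Proof. by move=> ? ? ? ? ? ?; apply: eqv_mul. Qed.

Definition EaddC a b := eqv_addC r s phi a b.
Definition EaddA a b c := eqv_addA r s phi a b c.
Definition Eadd0 a := eqv_add0 r s phi a.
Definition EaddN a := eqv_addN r s phi a.
Definition EmulA a b c := eqv_mulA r s phi a b c.
Definition Emul1l a := eqv_mul1l r s phi a.
Definition Emul1r a := eqv_mul1r r s phi a.
Definition Emul0l a := eqv_mul0l r s phi a.
Definition EmulDl a b c := eqv_mulDl r s phi a b c.
Definition EmulDr a b c := eqv_mulDr r s phi a b c.
Definition Ecadd x y := eqv_cadd r s phi x y.
Definition Ecmul x y := eqv_cmul r s phi x y.
Definition Eccomm x a := eqv_ccomm r s phi x a.

Lemma Eaddr0 a : Tadd a (Tc 0) === a.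
Proof. setoid_rewrite eqv_addC; exact: eqv_add0. Qed.
Lemma Emul0r a : Tmul a (Tc 0) === Tc 0.
Proof. setoid_rewrite <- eqv_ccomm; exact: eqv_mul0l. Qed.
Lemma EmulcA c x y : Tmul x (Tmul (Tc c) y) === Tmul (Tc c) (Tmul x y).
Proof. setoid_rewrite eqv_mulA. setoid_rewrite <- eqv_ccomm. setoid_rewrite <- eqv_mulA. reflexivity. Qed.

Lemma isum_cat l1 l2 : isum (l1 ++ l2) === Tadd (isum l1) (isum l2).
Proof.
elim: l1 => [|x l1 IH] /=; first by setoid_rewrite eqv_add0; reflexivity.
by setoid_rewrite IH; setoid_rewrite eqv_addA; reflexivity.
Qed.
Lemma isum_mull x l : Tmul x (isum l) === isum (map (fun p => (Tmul x p.1, p.2)) l).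
Proof.
elim: l => [|p l IH] /=; first exact: Emul0r.
setoid_rewrite eqv_mulDr. setoid_rewrite IH. setoid_rewrite eqv_mulA. setoid_rewrite eqv_mulA; reflexivity.
Qed.
Lemma isum_mulr y l : Tmul (isum l) y === isum (map (fun p => (p.1, Tmul p.2 y)) l).
Proof.
elim: l => [|p l IH] /=; first exact: eqv_mul0l.
setoid_rewrite eqv_mulDl. setoid_rewrite IH. apply: eqv_add; last reflexivity. apply: eqv_sym; apply: eqv_mulA.
Qed.


Lemma Eswap a b c d : Tadd (Tadd a b) (Tadd c d) === Tadd (Tadd a c) (Tadd b d).
Proof.
setoid_rewrite <- eqv_addA.
apply: eqv_add; first reflexivity.
setoid_rewrite eqv_addA. setoid_rewrite (EaddC b c).
setoid_rewrite <- eqv_addA. reflexivity.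
Qed.

Lemma E2I a b : a === b -> a ~= b.
Proof. move=> h; exists [::] => /=. setoid_rewrite Eaddr0. exact: h. Qed.

Lemma eqI_refl a : a ~= a.
Proof. by apply: E2I; reflexivity. Qed.

Lemma eqI_sym a b : a ~= b -> b ~= a.
Proof.
case=> l h.
exists (map (fun p => (Tmul (Tc (-1)) p.1, p.2)) l).
setoid_rewrite <- isum_mull.
transitivity (Tadd b (Tc 0)); first by apply: eqv_sym; apply: Eaddr0.
setoid_rewrite <- (EaddN (isum l)). rewrite /tsub.
setoid_rewrite eqv_addA. setoid_rewrite <- h. reflexivity.
Qed.

Lemma eqI_trans a b c : a ~= b -> b ~= c -> a ~= c.
Proof.
case=> l1 h1 [l2 h2]; exists (l2 ++ l1).
setoid_rewrite isum_cat. setoid_rewrite h1. setoid_rewrite h2.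
setoid_rewrite eqv_addA. reflexivity.
Qed.

Instance eqI_Equiv : Equivalence eqI.
Proof. split; [exact: eqI_refl | exact: eqI_sym | exact: eqI_trans]. Qed.

Instance Tadd_eqI : Proper (eqI ==> eqI ==> eqI) (@Tadd K).
Proof.
move=> a a' [l1 h1] b b' [l2 h2]; exists (l1 ++ l2).
setoid_rewrite isum_cat. setoid_rewrite h1. setoid_rewrite h2.
exact: Eswap.
Qed.

Instance Tmul_eqI : Proper (eqI ==> eqI ==> eqI) (@Tmul K).
Proof.
move=> a a' [l1 h1] b b' [l2 h2].
apply: (@eqI_trans _ (Tmul a' b)).
  exists (map (fun p => (p.1, Tmul p.2 b)) l1).
  setoid_rewrite <- isum_mulr. setoid_rewrite h1. exact: eqv_mulDl.
exists (map (fun p => (Tmul a' p.1, p.2)) l2).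
setoid_rewrite <- isum_mull. setoid_rewrite h2. exact: eqv_mulDr.
Qed.

#[local] Hint Extern 0 (eqI _ _) => reflexivity : core.
#[local] Hint Extern 0 (eqvL _ _ _ _ _) => reflexivity : core.

Instance eqv_sub_eqI : subrelation (eqvL r s phi) eqI.
Proof. move=> a b; exact: E2I. Qed.

Lemma Ih : (Th : term K) ~= Tc 0.
Proof.
exists [:: (Tc 1, Tc 1)] => /=.
setoid_rewrite eqv_add0. setoid_rewrite Eaddr0. setoid_rewrite eqv_mul1l.
setoid_rewrite eqv_mul1r. reflexivity.
Qed.

Lemma Iisum l : isum l ~= Tc 0.
Proof. exists l. apply: eqv_sym; apply: eqv_add0. Qed.

Lemma eqI_ideal a : a ~= Tc 0 -> in_ideal_h r s phi a.
Proof. case=> l h; exists l. setoid_rewrite h. exact: eqv_add0. Qed.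


Lemma Isub_add a b : a ~= Tadd (tsub a b) b.
Proof.
rewrite /tsub. setoid_rewrite <- EaddA. setoid_rewrite (EaddC _ b).
setoid_rewrite (EaddN b). setoid_rewrite Eaddr0. reflexivity.
Qed.

Lemma Isub0 a b : tsub a b ~= Tc 0 -> a ~= b.
Proof. move=> h. setoid_rewrite (Isub_add a b). setoid_rewrite h. setoid_rewrite Eadd0. reflexivity. Qed.

Lemma Icc a b x : Tmul (Tc a) (Tmul (Tc b) x) ~= Tmul (Tc (a * b)) x.
Proof. setoid_rewrite EmulA. setoid_rewrite Ecmul. reflexivity. Qed.

Lemma IcD a b x : Tadd (Tmul (Tc a) x) (Tmul (Tc b) x) ~= Tmul (Tc (a + b)) x.
Proof. setoid_rewrite <- EmulDl. setoid_rewrite Ecadd. reflexivity. Qed.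

Lemma IscA c x y : Tmul x (Tmul (Tc c) y) ~= Tmul (Tc c) (Tmul x y).
Proof. apply: E2I; exact: EmulcA. Qed.

Lemma Ic0 x : Tmul (Tc 0) x ~= Tc 0.
Proof. apply: E2I; exact: Emul0l. Qed.

Lemma Ic0r x : Tmul x (Tc 0) ~= Tc 0.
Proof. apply: E2I; exact: Emul0r. Qed.

Lemma tpowS (t : term K) n : tpow t n.+1 = Tmul t (tpow t n).
Proof. by []. Qed.

Lemma tpoly_gen (p : {poly K}) k n :
  foldr (fun i acc => Tadd (Tmul (Tc p`_i) (tpow Th i)) acc) (Tc 0) (iota k.+1 n) ~= Tc 0.
Proof.
elim: n k => [|n IH] k //=.
setoid_rewrite IH. setoid_rewrite Eaddr0.
setoid_rewrite Ih at 1. setoid_rewrite Ic0. exact: Ic0r.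
Qed.

Lemma tpoly0 (p : {poly K}) : tpoly p ~= Tc p`_0.
Proof.
rewrite /tpoly; case hs: (size p) => [|n] /=.
  by rewrite nth_default ?hs //; reflexivity.
setoid_rewrite tpoly_gen. setoid_rewrite Eaddr0. setoid_rewrite Emul1r. reflexivity.
Qed.

Definition c0 := phi`_0.

Lemma Idu : Tmul Td Tu ~= Tadd (Tmul (Tc s) (Tmul Tu Td)) (Tc c0).
Proof.
have h : rel_du s phi ~= Tc 0 by apply: E2I; exact: eqv_rel_du.
move/Isub0: h. setoid_rewrite tpoly0 => h.
setoid_rewrite (Isub_add (Tmul Td Tu) (Tmul (Tc s) (Tmul Tu Td))).
setoid_rewrite h. apply: E2I; exact: EaddC.
Qed.


Local Notation UP n := (@tpow K Tu n).
Local Notation DP n := (@tpow K Td n).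

Lemma tpow0 (t : term K) : tpow t 0 = Tc 1.
Proof. by []. Qed.

Fixpoint kap n := if n is n'.+1 then s * kap n' + c0 else 0.

Lemma dU n : Tmul Td (UP n.+1) ~=
  Tadd (Tmul (Tc (s ^+ n.+1)) (Tmul (UP n.+1) Td)) (Tmul (Tc (kap n.+1)) (UP n)).
Proof.
elim: n => [|n IH].
  rewrite !tpowS !tpow0 /= mulr0 add0r expr1.
  setoid_rewrite Emul1r. exact: Idu.
rewrite [UP n.+2]tpowS.
transitivity (Tmul (Tmul Td Tu) (UP n.+1)); first by apply: E2I; apply: EmulA.
setoid_rewrite Idu. setoid_rewrite EmulDl.
setoid_rewrite <- (EmulA (Tc s) (Tmul Tu Td) (UP n.+1)).
setoid_rewrite <- (EmulA Tu Td (UP n.+1)).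
setoid_rewrite IH.
setoid_rewrite EmulDr. setoid_rewrite IscA. setoid_rewrite EmulDr.
setoid_rewrite Icc.
rewrite -[Tmul Tu (UP n)]tpowS.
setoid_rewrite <- EaddA. setoid_rewrite IcD.
setoid_rewrite (EmulA Tu (UP n.+1) Td).
rewrite -tpowS -exprS /=. reflexivity.
Qed.


Definition mono (x : K * (nat * nat)) : term K :=
  Tmul (Tc x.1) (Tmul (UP x.2.1) (DP x.2.2)).
Definition msum (l : seq (K * (nat * nat))) : term K :=
  foldr (fun x acc => Tadd (mono x) acc) (Tc 0) l.
Definition NF (t : term K) := exists l, t ~= msum l.

Lemma msum_cat l1 l2 : msum (l1 ++ l2) ~= Tadd (msum l1) (msum l2).
Proof.
elim: l1 => [|x l1 IH] /=; first by setoid_rewrite Eadd0; reflexivity.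
setoid_rewrite IH. apply: E2I; exact: EaddA.
Qed.

Lemma NF_eq a b : a ~= b -> NF b -> NF a.
Proof. by move=> h [l hl]; exists l; setoid_rewrite h. Qed.

Lemma NF_add a b : NF a -> NF b -> NF (Tadd a b).
Proof. case=> l1 h1 [l2 h2]; exists (l1 ++ l2); setoid_rewrite msum_cat.
by setoid_rewrite h1; setoid_rewrite h2. Qed.

Lemma NF_c c : NF (Tc c).
Proof.
exists [:: (c, (0%N, 0%N))] => /=. rewrite /mono /=.
setoid_rewrite Eaddr0. setoid_rewrite Emul1r. setoid_rewrite Emul1r. reflexivity.
Qed.

Lemma msum_c c l : Tmul (Tc c) (msum l) ~= msum (map (fun x => (c * x.1, x.2)) l).
Proof.
elim: l => [|x l IH] /=; first by setoid_rewrite Ecmul; rewrite mulr0; reflexivity.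
setoid_rewrite EmulDr. setoid_rewrite IH. rewrite /mono /=.
setoid_rewrite Icc. reflexivity.
Qed.

Lemma msum_u l : Tmul Tu (msum l) ~= msum (map (fun x => (x.1, (x.2.1.+1, x.2.2))) l).
Proof.
elim: l => [|x l IH] /=; first exact: Ic0r.
setoid_rewrite EmulDr. setoid_rewrite IH. rewrite /mono /=.
setoid_rewrite IscA. setoid_rewrite (EmulA Tu (UP x.2.1) (DP x.2.2)). rewrite -tpowS. reflexivity.
Qed.

Definition dstep (x : K * (nat * nat)) : seq (K * (nat * nat)) :=
  let: (c, (i, j)) := x in
  if i is i'.+1 then [:: (c * s ^+ i'.+1, (i'.+1, j.+1)); (c * kap i'.+1, (i', j))]
  else [:: (c, (0%N, j.+1))].

Lemma mono_d x : Tmul Td (mono x) ~= msum (dstep x).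
Proof.
case: x => c [i j]; rewrite /mono /=.
setoid_rewrite IscA. setoid_rewrite (EmulA Td (UP i) (DP j)).
case: i => [|i].
  rewrite /= /mono /=. setoid_rewrite (Emul1r Td). setoid_rewrite Eaddr0.
  setoid_rewrite (Emul1l (Tmul Td (DP j))). reflexivity.
setoid_rewrite dU. rewrite /= /mono /=. setoid_rewrite Eaddr0.
setoid_rewrite EmulDl. setoid_rewrite EmulDr.
setoid_rewrite <- (EmulA (Tc (s ^+ i.+1)) (Tmul (Tmul Tu (UP i)) Td) (DP j)).
setoid_rewrite <- (EmulA (Tc (s * kap i + c0)) (UP i) (DP j)).
setoid_rewrite <- (EmulA (Tmul Tu (UP i)) Td (DP j)).
setoid_rewrite Icc. reflexivity.
Qed.

Lemma msum_d l : Tmul Td (msum l) ~= msum (flatten (map dstep l)).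
Proof.
elim: l => [|x l IH] /=; first exact: Ic0r.
setoid_rewrite EmulDr. setoid_rewrite IH. setoid_rewrite mono_d.
setoid_rewrite msum_cat. reflexivity.
Qed.

Lemma NF_mul a b : NF b -> NF (Tmul a b).
Proof.
elim: a b => [| | |c|a1 IH1 a2 IH2|a1 IH1 a2 IH2] b [l hl].
- exists (map (fun x => (x.1, (x.2.1.+1, x.2.2))) l). setoid_rewrite hl. exact: msum_u.
- exists (flatten (map dstep l)). setoid_rewrite hl. exact: msum_d.
- exists [::] => /=. setoid_rewrite Ih. exact: Ic0.
- exists (map (fun x => (c * x.1, x.2)) l). setoid_rewrite hl. exact: msum_c.
- apply: (NF_eq (b := Tadd (Tmul a1 b) (Tmul a2 b))); first by apply: E2I; exact: EmulDl.
  apply: NF_add; [apply: IH1 | apply: IH2]; by exists l.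
- apply: (NF_eq (b := Tmul a1 (Tmul a2 b))); first by apply: E2I; apply: eqv_sym; exact: EmulA.
  apply: IH1; apply: IH2; by exists l.
Qed.

Lemma NF_all t : NF t.
Proof.
elim: t => [| | |c|a IHa b IHb|a IHa b IHb].
- apply: (NF_eq (b := Tmul Tu (Tc 1))); first by apply: E2I; apply: eqv_sym; exact: Emul1r.
  apply: NF_mul; exact: NF_c.
- apply: (NF_eq (b := Tmul Td (Tc 1))); first by apply: E2I; apply: eqv_sym; exact: Emul1r.
  apply: NF_mul; exact: NF_c.
- apply: (NF_eq (b := Tmul Th (Tc 1))); first by apply: E2I; apply: eqv_sym; exact: Emul1r.
  apply: NF_mul; exact: NF_c.
- exact: NF_c.
- exact: NF_add.
- exact: NF_mul.
Qed.


Definition tsum (ts : seq (term K)) : term K := foldr (@Tadd K) (Tc 0) ts.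
Definition coef (l : seq (K * (nat * nat))) (p : nat * nat) : K :=
  \sum_(x <- l | x.2 == p) x.1.

Lemma tsum0 (f : nat * nat -> K) P : (forall p, p \in P -> f p = 0) ->
  tsum [seq mono (f p, p) | p <- P] ~= Tc 0.
Proof.
elim: P => [|q P IH] hP //=.
rewrite hP ?mem_head // /mono /=. setoid_rewrite Ic0. setoid_rewrite Eadd0.
apply: IH => p hp; apply: hP; by rewrite in_cons hp orbT.
Qed.

Lemma tsum_split (F G : nat * nat -> term K) P :
  tsum [seq Tadd (F p) (G p) | p <- P] ~=
  Tadd (tsum [seq F p | p <- P]) (tsum [seq G p | p <- P]).
Proof.
elim: P => [|q P IH] /=; first by setoid_rewrite Eadd0.
setoid_rewrite IH. apply: E2I; exact: Eswap.
Qed.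

Lemma tsum_one (x : K * (nat * nat)) P : uniq P -> x.2 \in P ->
  tsum [seq mono ((if x.2 == p then x.1 else 0), p) | p <- P] ~= mono x.
Proof.
elim: P => [|q P IH] //= /andP [hq hu] hin.
case: (eqVneq x.2 q) => [e|ne].
  setoid_rewrite tsum0; first by rewrite /mono /= -e; setoid_rewrite Eaddr0.
  move=> p hp; case: eqP => // e'; rewrite -e' e in hp; by rewrite hp in hq.
rewrite /mono /=. setoid_rewrite Ic0. setoid_rewrite Eadd0. apply: IH => //.
by move: hin; rewrite in_cons (negbTE ne).
Qed.

Lemma tsum_eq (F G : nat * nat -> term K) P : (forall p, F p ~= G p) ->
  tsum [seq F p | p <- P] ~= tsum [seq G p | p <- P].
Proof. move=> h; elim: P => [|q P IH] //=. by setoid_rewrite IH; setoid_rewrite h. Qed.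

Lemma group l P : uniq P -> (forall x, x \in l -> x.2 \in P) ->
  msum l ~= tsum [seq mono (coef l p, p) | p <- P].
Proof.
move=> hu; elim: l => [|x l IH] hl /=.
  symmetry; apply: tsum0 => p _; by rewrite /coef big_nil.
transitivity (tsum [seq Tadd (mono ((if x.2 == p then x.1 else 0), p)) (mono (coef l p, p)) | p <- P]).
  setoid_rewrite tsum_split. setoid_rewrite tsum_one => //; last by apply: hl; rewrite mem_head.
  rewrite -IH //; move=> y hy; apply: hl; by rewrite in_cons hy orbT.
apply: tsum_eq => p. rewrite /mono /= /coef big_cons. setoid_rewrite IcD.
case: eqP => _ /=; rewrite ?add0r; reflexivity.
Qed.

End Syn.

Section Sound.
Variable K : numClosedFieldType.
Variables (r s : K) (phi : {poly K}).
Variable M : lmodType K.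
Variables (U D H : M -> M).
Hypothesis (lU : linear U) (lD : linear D) (lH : linear H).
Hypothesis (rhu : forall m, act U D H (rel_hu r) m = 0)
  (rdh : forall m, act U D H (rel_dh r) m = 0)
  (rdu : forall m, act U D H (rel_du s phi) m = 0).

Local Notation act := (act U D H).

Lemma act_lin t a x y : act t (a *: x + y) = a *: act t x + act t y.
Proof.
elim: t x y => [| | |c|t1 IH1 t2 IH2|t1 IH1 t2 IH2] x y /=.
- exact: lU.
- exact: lD.
- exact: lH.
- by rewrite scalerDr !scalerA mulrC.
- by rewrite IH1 IH2 scalerDr addrACA.
- by rewrite IH2 IH1.
Qed.

Lemma act0 t : act t 0 = 0.
Proof.
have := act_lin t 1 0 0; rewrite !scale1r addr0 => h.
by apply: (addrI (act t 0)); rewrite addr0 -h.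
Qed.

Lemma actD t x y : act t (x + y) = act t x + act t y.
Proof. by have := act_lin t 1 x y; rewrite !scale1r. Qed.

Lemma actZ t a x : act t (a *: x) = a *: act t x.
Proof. by rewrite -[a *: x]addr0 act_lin act0 addr0. Qed.

Lemma sound a b : eqvL r s phi a b -> forall m, act a m = act b m.
Proof.
elim=> {a b} /=.
- by [].
- by move=> a b _ h m; rewrite h.
- by move=> a b c _ h1 _ h2 m; rewrite h1 h2.
- by move=> a a' b b' _ h1 _ h2 m; rewrite h1 h2.
- by move=> a a' b b' _ h1 _ h2 m; rewrite h2 h1.
- by move=> a b c m; rewrite addrA.
- by move=> a b m; rewrite addrC.
- by move=> a m; rewrite scale0r add0r.
- by move=> a m; rewrite scaleN1r subrr scale0r.
- by [].
- by move=> a m; rewrite scale1r.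
- by move=> a m; rewrite scale1r.
- by move=> a m; rewrite !scale0r.
- by [].
- by move=> a b c m; rewrite actD.
- by move=> x y m; rewrite scalerDl.
- by move=> x y m; rewrite scalerA.
- by move=> x a m; rewrite actZ.
- by move=> m; rewrite scale0r; exact: rhu m.
- by move=> m; rewrite scale0r; exact: rdh m.
- by move=> m; rewrite scale0r; exact: rdu m.
Qed.

Hypothesis hH0 : forall m, H m = 0.

Lemma act_isum l m : act (isum l) m = 0.
Proof.
elim: l => [|p l IH] /=; first by rewrite scale0r.
by rewrite IH hH0 act0 addr0.
Qed.

Lemma soundI a b : eqI r s phi a b -> forall m, act a m = act b m.
Proof. case=> l h m; by rewrite (sound h) /= act_isum addr0. Qed.

End Sound.
Section Lin.
Variable K : numClosedFieldType.
Variable M : lmodType K.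

Definition islin (f : M -> M) := forall a x y, f (a *: x + y) = a *: f x + f y.

Variable f : M -> M.
Hypothesis hf : islin f.

Lemma f0 : f 0 = 0.
Proof. have := hf 1 0 0; rewrite !scale1r addr0 => h. by apply: (addrI (f 0)); rewrite addr0 -h. Qed.
Lemma fD x y : f (x + y) = f x + f y.
Proof. by have := hf 1 x y; rewrite !scale1r. Qed.
Lemma fZ a x : f (a *: x) = a *: f x.
Proof. by rewrite -[a *: x]addr0 hf f0 addr0. Qed.
Lemma fN x : f (- x) = - f x.
Proof. by rewrite -scaleN1r fZ scaleN1r. Qed.
Lemma fB x y : f (x - y) = f x - f y.
Proof. by rewrite fD fN. Qed.
Lemma fsum n (F : 'I_n -> M) : f (\sum_(i < n) F i) = \sum_(i < n) f (F i).
Proof.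
elim: n F => [|n IH] F; first by rewrite !big_ord0 f0.
by rewrite !big_ord_recr /= fD IH.
Qed.
End Lin.

Lemma iter_lin (K : numClosedFieldType) (M : lmodType K) (f : M -> M) n :
  islin f -> islin (iter n f).
Proof. move=> hf; elim: n => [|n IH] a x y //=. by rewrite IH hf. Qed.

Lemma islin_comp (K : numClosedFieldType) (M : lmodType K) (f g : M -> M) :
  islin f -> islin g -> islin (fun m => f (g m)).
Proof. by move=> hf hg a x y; rewrite hg hf. Qed.

Section Sem.
Variable K : numClosedFieldType.
Variable M : lmodType K.
Variables (U D : M -> M) (s psi0 : K).
Hypothesis (lU : islin U) (lD : islin D).
Hypothesis hs : s != 0.
Hypothesis hsroot : forall n : nat, (0 < n)%N -> s ^+ n != 1.
Hypothesis hDU : forall m, D (U m) = s *: U (D m) + (s * psi0 - psi0) *: m.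

Definition T m := U (D m) + psi0 *: m.

Hypothesis hsurj : forall m, exists m', T m' = m.
Hypothesis Tinj : forall m, T m = 0 -> m = 0.
Hypothesis hnz : exists m : M, m != 0.

Lemma lT : islin T.
Proof. move=> a x y; rewrite /T lD lU !scalerDr !scalerA [psi0 * a]mulrC. by rewrite addrACA. Qed.

Lemma TU m : T (U m) = s *: U (T m).
Proof.
rewrite /T hDU lU (fD lU) !(fZ lU) scalerDr scalerA -addrA; congr (_ + _).
by rewrite -scalerDl subrK.
Qed.

Lemma DT m : D (T m) = s *: T (D m).
Proof.
rewrite /T (fD lD) hDU !(fZ lD) scalerDr scalerA -addrA; congr (_ + _).
by rewrite -scalerDl subrK.
Qed.

Lemma TUn n m : T (iter n U m) = s ^+ n *: iter n U (T m).
Proof.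
elim: n => [|n IH] /=; first by rewrite scale1r.
by rewrite TU IH (fZ lU) scalerA exprS.
Qed.

Lemma DTn n m : iter n D (T m) = s ^+ n *: T (iter n D m).
Proof.
elim: n => [|n IH] /=; first by rewrite scale1r.
by rewrite IH (fZ lD) DT scalerA exprS mulrC.
Qed.

Lemma sn_neq0 n : s ^+ n != 0.
Proof. by rewrite expf_neq0. Qed.

Lemma UnT n x : iter n U (T x) = (s ^+ n)^-1 *: T (iter n U x).
Proof. by rewrite TUn scalerA mulVf ?sn_neq0 // scale1r. Qed.

Lemma eigU v l n : T v = l *: v -> T (iter n U v) = (s ^+ n * l) *: iter n U v.
Proof. by move=> h; rewrite TUn h (fZ (iter_lin n lU)) scalerA. Qed.

Lemma eigD v l n : T v = l *: v -> T (iter n D v) = ((s ^+ n)^-1 * l) *: iter n D v.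
Proof.
move=> h; have := DTn n v; rewrite h (fZ (iter_lin n lD)) => e.
by rewrite -scalerA e scalerA mulVf ?sn_neq0 // scale1r.
Qed.


Definition pev (p : {poly K}) (m : M) : M := \sum_(i < size p) p`_i *: iter i T m.

Lemma pevE (p : {poly K}) (m : M) n : (size p <= n)%N -> pev p m = \sum_(i < n) p`_i *: iter i T m.
Proof.
move=> h; rewrite /pev (big_ord_widen n (fun i => p`_i *: iter i T m) h) big_mkcond.
apply: eq_bigr => i _; case: ltnP => //= hi; by rewrite nth_default // scale0r.
Qed.

Lemma pevD (p q : {poly K}) (m : M) : pev (p + q) m = pev p m + pev q m.
Proof.
set n := maxn (size p) (size q).
have hp : (size p <= n)%N by rewrite leq_maxl.
have hq : (size q <= n)%N by rewrite leq_maxr.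
have hpq : (size (p + q)%R <= n)%N by rewrite (leq_trans (size_polyD _ _)).
rewrite (pevE _ hpq) (pevE _ hp) (pevE _ hq) -big_split /=.
by apply: eq_bigr => i _; rewrite coefD scalerDl.
Qed.

Lemma pevZ a (p : {poly K}) (m : M) : pev (a *: p) m = a *: pev p m.
Proof.
rewrite (pevE _ (size_scale_leq a p)) /pev scaler_sumr.
by apply: eq_bigr => i _; rewrite coefZ scalerA.
Qed.

Lemma pevB (p q : {poly K}) (m : M) : pev (p - q) m = pev p m - pev q m.
Proof. by rewrite pevD -[(- q)%R]scaleN1r pevZ scaleN1r. Qed.

Lemma iterT_lin n : islin (iter n T).
Proof. exact: iter_lin lT. Qed.

Lemma pevX (p : {poly K}) (m : M) : pev ('X * p) m = T (pev p m).
Proof.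
have h : (size ('X * p)%R <= (size p).+1)%N.
  by rewrite mulrC (leq_trans (size_mul_leq _ _)) // size_polyX addn2.
rewrite (pevE _ h) big_ord_recl coefXM eqxx scale0r add0r /pev (fsum lT).
apply: eq_bigr => i _; by rewrite coefXM /= (fZ lT).
Qed.

Lemma pevC c m : pev c%:P m = c *: m.
Proof.
rewrite (pevE _ (size_polyC_leq1 c)) big_ord_recl big_ord0 addr0 /=.
by rewrite coefC.
Qed.

Lemma iterT_eig v l n : T v = l *: v -> iter n T v = l ^+ n *: v.
Proof.
move=> h; elim: n => [|n IH] /=; first by rewrite scale1r.
by rewrite IH (fZ lT) h scalerA exprS mulrC.
Qed.

Lemma pev_eig (p : {poly K}) (v : M) l : T v = l *: v -> pev p v = p.[l] *: v.
Proof.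
move=> h; rewrite /pev horner_coef scaler_suml; apply: eq_bigr => i _.
by rewrite (iterT_eig _ h) scalerA.
Qed.

Fixpoint g n : {poly K} :=
  if n is n'.+1 then ((s^-1) ^+ n') *: ('X * g n') - psi0 *: g n' else 1.

Lemma pev_g n m : pev (g n) m = iter n U (iter n D m).
Proof.
elim: n m => [|n IH] m /=; first by rewrite pevC scale1r.
rewrite pevB !pevZ pevX IH.
rewrite -[U (iter n U _)]/(iter n.+1 U _) iterSr /=.
have -> : U (D (iter n D m)) = T (iter n D m) - psi0 *: iter n D m by rewrite /T addrK.
rewrite (fB (iter_lin n lU)) (fZ (iter_lin n lU)) UnT exprVn. by [].
Qed.

Lemma g_top n : (g n)`_n != 0 /\ forall k, (n < k)%N -> (g n)`_k = 0.
Proof.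
elim: n => [|n [IH1 IH2]] /=.
  by rewrite coefC eqxx oner_eq0; split => // k; rewrite coefC; case: k.
split.
  rewrite coefB !coefZ coefXM /= (IH2 n.+1) // mulr0 subr0 mulf_neq0 //.
  by rewrite expf_neq0 // invr_eq0.
move=> k hk; rewrite coefB !coefZ coefXM (IH2 k) ?(ltn_trans _ hk) // mulr0 subr0.
case: k hk => // k hk /=; by rewrite IH2 // mulr0.
Qed.


Lemma eig_ex n : forall P : {poly K}, (size P <= n)%N -> P != 0 ->
  (forall m, pev P m = 0) -> exists v l, v != 0 /\ T v = l *: v.
Proof.
elim: n => [|n IH] P hsz hP hev.
  by move: hP; rewrite -size_poly_eq0 -leqn0 hsz.
have [/size_poly1P [c hc eP] | hs1] := boolP (size P == 1%N).
  case: hnz => m hm; have := hev m; rewrite eP pevC => /eqP.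
  by rewrite scaler_eq0 (negbTE hc) (negbTE hm).
case/closed_rootP: hs1 => x /factor_theorem [Q eP].
have hQ : Q != 0 by apply: contraNneq hP => e; rewrite eP e mul0r.
have hsQ : (size Q <= n)%N.
  move: hsz; rewrite eP size_mul // ?size_XsubC ?polyXsubC_eq0 //.
  by rewrite addn2.
have hevQ m : pev P m = T (pev Q m) - x *: pev Q m.
  by rewrite eP mulrBr [Q * _]mulrC [Q * _]mulrC mul_polyC pevB pevX pevZ.
case: (classic (forall m, pev Q m = 0)) => [hall | /not_all_ex_not [m hm]].
  exact: IH Q hsQ hQ hall.
exists (pev Q m), x; split; first by apply/eqP.
by have := hev m; rewrite hevQ => /eqP; rewrite subr_eq0 => /eqP.
Qed.

Lemma spow_inj a b : s ^+ a = s ^+ b -> a = b.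
Proof.
wlog hab : a b / (a <= b)%N.
  move=> W e; case: (leqP a b) => h; first exact: W.
  by apply/esym/W => //; apply: ltnW.
have [k ->] : exists k, b = (a + k)%N by exists (b - a)%N; rewrite subnKC.
rewrite exprD -{1}[s ^+ a]mulr1 => /mulfI => /(_ (sn_neq0 a)) e.
case: k e => [|k] e; first by rewrite addn0.
by have := hsroot (ltn0Sn k); rewrite -e eqxx.
Qed.

Lemma root_avoid (P : {poly K}) (f : nat -> K) : P != 0 -> injective f ->
  exists a, (a < size P)%N /\ ~~ root P (f a).
Proof.
move=> hP hf; apply: NNPP => hno.
have hall : all (root P) (mkseq f (size P)).
  apply/allP => y /mapP [a]; rewrite mem_iota add0n => /andP [_ ha] ->.
  apply: NNPP => hr; apply: hno; exists a; split => //; exact/negP.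
have := max_poly_roots hP hall (mkseq_uniq _ hf).
by rewrite size_mkseq ltnn.
Qed.

Lemma last_nz (f : M -> M) v a : v != 0 -> iter a f v = 0 ->
  exists b, iter b f v != 0 /\ f (iter b f v) = 0.
Proof.
move=> hv; elim: a => [|a IH] /=; first by move=> e; move: hv; rewrite e eqxx.
case: (eqVneq (iter a f v) 0) => [e _ | ne e]; first exact: IH.
by exists a.
Qed.

Lemma S4 (P : {poly K}) : P != 0 -> (forall m, pev P m = 0) -> False.
Proof.
move=> hP hev.
have [v [l [hv hTv]]] := eig_ex (leqnn (size P)) hP hev.
have hl : l != 0.
  apply: contraNneq hv => e; apply/eqP; apply: Tinj; by rewrite hTv e scale0r.
have [a [_ ha]] : exists a, (a < size P)%N /\ ~~ root P (s ^+ a * l).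
  apply: root_avoid => // x y; move/(mulIf hl); exact: spow_inj.
have hUa : iter a U v = 0.
  have := hev (iter a U v); rewrite (pev_eig _ (eigU _ hTv)) => /eqP.
  by rewrite /root in ha; rewrite scaler_eq0 (negbTE ha) => /eqP.
have [b [hb1 hb2]] := last_nz hv hUa.
set w := iter b U v in hb1 hb2.
have hTw : T w = (s ^+ b * l) *: w by exact: eigU.
have e1 : s ^+ b.+1 * l = psi0.
  have := hDU w; rewrite hb2 (f0 lD).
  have -> : U (D w) = (s ^+ b * l - psi0) *: w by rewrite scalerBl -hTw /T addrK.
  rewrite scalerA -scalerDl => /esym/eqP; rewrite scaler_eq0 (negbTE hb1) orbF.
  rewrite mulrBr addrA subrK exprS mulrA subr_eq0 => /eqP ->.
  by [].
have [a' [_ ha']] : exists a, (a < size P)%N /\ ~~ root P ((s ^+ a)^-1 * l).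
  apply: root_avoid => // x y; move/(mulIf hl)/invr_inj; exact: spow_inj.
have hDa : iter a' D v = 0.
  have := hev (iter a' D v); rewrite (pev_eig _ (eigD _ hTv)) => /eqP.
  by rewrite /root in ha'; rewrite scaler_eq0 (negbTE ha') => /eqP.
have [b' [hb1' hb2']] := last_nz hv hDa.
set w' := iter b' D v in hb1' hb2'.
have hTw' : T w' = ((s ^+ b')^-1 * l) *: w' by exact: eigD.
have e2 : (s ^+ b')^-1 * l = psi0.
  move: hTw'; rewrite /T hb2' (f0 lU) add0r => /eqP; rewrite eq_sym -subr_eq0 -scalerBl.
  rewrite scaler_eq0 (negbTE hb1') orbF subr_eq0 => /eqP. by [].
have : s ^+ (b.+1 + b') = 1.
  rewrite exprD; apply: (mulIf hl).
  by rewrite mul1r mulrAC e1 -e2 mulrAC mulVf ?sn_neq0 // mul1r.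
move=> e; have := hsroot (ltn0Sn (b + b')); by rewrite -addSn e eqxx.
Qed.



Lemma pev0 m : pev 0 m = 0.
Proof. by rewrite /pev size_poly0 big_ord0. Qed.

Lemma pev_sum N (F : 'I_N -> {poly K}) m : pev (\sum_(j < N) F j) m = \sum_(j < N) pev (F j) m.
Proof.
elim: N F => [|N IH] F; first by rewrite !big_ord0 pev0.
by rewrite !big_ord_recr /= pevD IH.
Qed.

Lemma gsum_eq0 k N (a : nat -> K) : \sum_(j < N) a j *: g (j + k) = 0 ->
  forall j, (j < N)%N -> a j = 0.
Proof.
elim: N => [|N IH] h j hj //.
move: h; rewrite big_ord_recr /= => h.
have hN : a N = 0.
  have := congr1 (fun p : {poly K} => p`_(N + k)) h; rewrite coef0 coefD coefZ coef_sum.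
  rewrite big1 ?add0r; last first.
    move=> i _; rewrite coefZ (proj2 (g_top _)) ?mulr0 //.
    by rewrite ltn_add2r.
  move/eqP; rewrite mulf_eq0 (negbTE (proj1 (g_top _))) orbF => /eqP //.
move: h; rewrite hN scale0r addr0 => h.
case: (ltnP j N) => hjN; first exact: IH.
by have -> : j = N by apply/eqP; rewrite eqn_leq hjN -ltnS hj.
Qed.

Lemma sum_single N (h : nat -> K) (G : nat -> M) p :
  (forall i, (i < N)%N -> i != p -> h i = 0) ->
  \sum_(i < N) h i *: G i = (if (p < N)%N then h p else 0) *: G p.
Proof.
move=> hh; case: ifP => hp.
  rewrite (bigD1 (Ordinal hp)) //= big1 ?addr0 // => i hi.
  rewrite hh ?scale0r //; apply: contra hi => /eqP e; apply/eqP; exact: val_inj.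
rewrite scale0r big1 // => i _; rewrite hh ?scale0r //.
by apply: contraFneq hp => <-.
Qed.

Definition FF N (f : nat -> nat -> K) m :=
  \sum_(i < N) \sum_(j < N) f i j *: iter i U (iter j D m).

Lemma class_zero N f i0 j0 : (forall m, FF N f m = 0) ->
  (forall i j, (i < N)%N -> (j < N)%N -> (i + j0 != j + i0)%N -> f i j = 0) ->
  forall i j, (i < N)%N -> (j < N)%N -> f i j = 0.
Proof.
move=> hF hsupp i j hi hj.
case: (boolP (i + j0 == j + i0)%N) => hij; last exact: hsupp.
case: (leqP j0 i0) => hji.
- set k := (i0 - j0)%N.
  have ei0 : i0 = (k + j0)%N by rewrite subnK.
  have supp i' j' : (i' < N)%N -> (j' < N)%N -> i' != (j' + k)%N -> f i' j' = 0.
    move=> hi' hj' ne; apply: hsupp => //; rewrite ei0 addnA eqn_add2r //.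
  set a := fun j' => if (j' + k < N)%N then f (j' + k)%N j' else 0.
  have hpev m : pev (\sum_(j' < N) a j' *: g (j' + k)) m = 0.
    rewrite pev_sum; transitivity (FF N f (iter k D m)); last exact: hF.
    rewrite /FF exchange_big /=.
    apply: eq_bigr => j' _; rewrite pevZ pev_g.
    rewrite (@sum_single N (fun i' => f i' j') (fun i' => iter i' U (iter j' D (iter k D m))) (j' + k)%N).
      by rewrite /a [iter (j' + k) D m]iterD.
    by move=> i' hi' ne; apply: supp.
  have hP : \sum_(j' < N) a j' *: g (j' + k) = 0.
    apply: NNPP => hne; apply: (S4 _ hpev); exact/eqP.
  have e : i = (j + k)%N.
    by apply/eqP; rewrite -(eqn_add2r j0) -addnA -ei0.
  have := gsum_eq0 hP hj; rewrite /a -e hi => //.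
- set k := (j0 - i0)%N.
  have ej0 : j0 = (k + i0)%N by rewrite subnK // ltnW.
  have supp i' j' : (i' < N)%N -> (j' < N)%N -> j' != (i' + k)%N -> f i' j' = 0.
    move=> hi' hj' ne; apply: hsupp => //; rewrite ej0 addnA eqn_add2r eq_sym //.
  set a := fun i' => if (i' + k < N)%N then f i' (i' + k)%N else 0.
  have hpev m : pev (\sum_(i' < N) a i' *: g (i' + k)) m = 0.
    rewrite pev_sum; transitivity (iter k U (FF N f m)); last by rewrite hF (f0 (iter_lin k lU)).
    rewrite /FF (fsum (iter_lin k lU)).
    apply: eq_bigr => i' _; rewrite pevZ pev_g.
    rewrite (@sum_single N (fun j' => f i' j') (fun j' => iter i' U (iter j' D m)) (i' + k)%N).
      by rewrite (fZ (iter_lin k lU)) -iterD [(k + i')%N]addnC.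
    by move=> j' hj' ne; apply: supp.
  have hP : \sum_(i' < N) a i' *: g (i' + k) = 0.
    apply: NNPP => hne; apply: (S4 _ hpev); exact/eqP.
  have e : j = (i + k)%N.
    by apply/eqP; rewrite -(eqn_add2r i0) -addnA -ej0 eq_sym.
  have := gsum_eq0 hP hi; rewrite /a -e hj => //.
Qed.


Lemma T_UD i j m : T (iter i U (iter j D m)) = (s ^+ i / s ^+ j) *: iter i U (iter j D (T m)).
Proof.
rewrite TUn.
have -> : T (iter j D m) = (s ^+ j)^-1 *: iter j D (T m).
  by rewrite DTn scalerA mulVf ?sn_neq0 // scale1r.
by rewrite (fZ (iter_lin i lU)) scalerA.
Qed.

Lemma FF_T N f m : T (FF N f m) = FF N (fun i j => f i j * (s ^+ i / s ^+ j)) (T m).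
Proof.
rewrite /FF (fsum lT); apply: eq_bigr => i _; rewrite (fsum lT); apply: eq_bigr => j _.
by rewrite (fZ lT) T_UD scalerA.
Qed.

Lemma FF_lin N f (x : nat -> nat -> K) c m :
  FF N (fun i j => f i j * (x i j - c)) m = FF N (fun i j => f i j * x i j) m - c *: FF N f m.
Proof.
rewrite /FF scaler_sumr -sumrB; apply: eq_bigr => i _.
rewrite scaler_sumr -sumrB; apply: eq_bigr => j _.
by rewrite mulrBr scalerBl scalerA [c * _]mulrC.
Qed.

Definition cnt N (f : nat -> nat -> K) : nat := (\sum_(i < N) \sum_(j < N) (f i j != 0%R : nat))%N.

Lemma sum_lt N (A B : 'I_N -> nat) i0 : (forall i, A i <= B i)%N -> (A i0 < B i0)%N ->
  (\sum_(i < N) A i < \sum_(i < N) B i)%N.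
Proof.
move=> hle hlt; rewrite (bigD1 i0) //= [X in (_ < X)%N](bigD1 i0) //= -addSn.
by apply: leq_add => //; apply: leq_sum => i _.
Qed.

Lemma cnt_lt N (f f' : nat -> nat -> K) i0 j0 (hi0 : (i0 < N)%N) (hj0 : (j0 < N)%N) :
  (forall i j, f i j = 0 -> f' i j = 0) -> f' i0 j0 = 0 -> f i0 j0 != 0 ->
  (cnt N f' < cnt N f)%N.
Proof.
move=> hff h1 h2.
have le i j : ((f' i j != 0%R : nat) <= (f i j != 0%R : nat))%N.
  case: (eqVneq (f i j) 0) => [e|ne]; first by rewrite hff ?e ?eqxx.
  by case: (f' i j != 0).
apply: (@sum_lt N _ _ (Ordinal hi0)) => [i|]; first by apply: leq_sum => j _.
apply: (@sum_lt N _ _ (Ordinal hj0)) => [j|] //=.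
by rewrite h1 eqxx h2.
Qed.

Lemma fac_nz i j i0 j0 : (i + j0 != j + i0)%N -> s ^+ i / s ^+ j - s ^+ i0 / s ^+ j0 != 0.
Proof.
move=> h; apply: contra h; rewrite subr_eq0 => /eqP e; apply/eqP; apply: spow_inj.
have := congr1 (fun x => x * s ^+ j * s ^+ j0) e.
rewrite divfK ?sn_neq0 // [_ / _ * _]mulrAC divfK ?sn_neq0 // => e2.
by rewrite !exprD e2 mulrC.
Qed.

Lemma indep_aux N n : forall f, (cnt N f <= n)%N -> (forall m, FF N f m = 0) ->
  forall i j, (i < N)%N -> (j < N)%N -> f i j = 0.
Proof.
elim: n => [|n IH] f hc hF;
  (apply: NNPP => /not_all_ex_not [i0 /not_all_ex_not [j0 h0]];
   have [hi0 hj0 hf0] : [/\ (i0 < N)%N, (j0 < N)%N & f i0 j0 != 0]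
     by (apply: NNPP => hn; apply: h0 => hi hj; apply: NNPP => hne; apply: hn; split => //; exact/eqP)).
all: set c := s ^+ i0 / s ^+ j0.
all: set f' := fun i j => f i j * (s ^+ i / s ^+ j - c).
all: have hlt : (cnt N f' < cnt N f)%N
  by (apply: (cnt_lt hi0 hj0) => [i j e||//]; rewrite /f' ?e ?mul0r // /c subrr mulr0).
- by move: (leq_trans hlt hc).
have hF' : forall m, FF N f' m = 0.
  move=> m; have [m' <-] := hsurj m.
  by rewrite /f' FF_lin -FF_T !hF (f0 lT) scaler0 subr0.
have hz := IH f' (leq_trans (leq_trans hlt hc) (leqnn _)) hF'.
apply: h0 => _ _; apply: (@class_zero N f i0 j0 hF _ i0 j0 hi0 hj0) => i j hi hj hne.
have := hz i j hi hj; rewrite /f' => /eqP; rewrite mulf_eq0 => /orP [/eqP //|].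
by rewrite (negbTE (fac_nz hne)).
Qed.

Lemma indep N f : (forall m, FF N f m = 0) ->
  forall i j, (i < N)%N -> (j < N)%N -> f i j = 0.
Proof. exact: (@indep_aux N (cnt N f) f (leqnn _)). Qed.


End Sem.

Section Main.
Variable K : numClosedFieldType.

Lemma act_tsum (M : lmodType K) (U D H : M -> M) (ts : seq (term K)) m :
  act U D H (tsum ts) m = \sum_(t <- ts) act U D H t m.
Proof.
elim: ts => [|t ts IH] /=; first by rewrite big_nil scale0r.
by rewrite big_cons IH.
Qed.

Lemma act_tpow (M : lmodType K) (U D H : M -> M) (t : term K) n m :
  act U D H (tpow t n) m = iter n (act U D H t) m.
Proof. elim: n => [|n IH] /=; [by rewrite scale1r | by rewrite IH]. Qed.

Lemma act_mono (M : lmodType K) (U D H : M -> M) x m :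
  act U D H (mono x) m = x.1 *: iter x.2.1 U (iter x.2.2 D m).
Proof. by rewrite /mono /= !act_tpow. Qed.

Lemma conf0 (r s : K) (phi psi : {poly K}) : conformal_poly r s phi psi ->
  phi`_0 = s * psi`_0 - psi`_0.
Proof.
rewrite /conformal_poly => <-.
by rewrite -horner_coef0 horner_comp hornerZ hornerX mulr0 horner_coef0 coefB coefZ.
Qed.

End Main.

Theorem mainTheorem11 (K : numClosedFieldType) (r s : K) (phi psi : {poly K})
  (hr : r != 0) (hs : s != 0)
  (hconf : conformal_poly r s phi psi)
  (hsroot : forall n : nat, (0 < n)%N -> s ^+ n != 1)
  (M : lmodType K) (U D H : M -> M)
  (hmod : is_Lmodule U D H r s phi)
  (hsimple : is_simple U D H)
  (hHM : forall m : M, exists m' : M, act U D H (Hterm psi) m' = m)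
  (hhM : forall m : M, H m = 0) :
  forall t : term K, in_ann U D H t <-> in_ideal_h r s phi t.
Proof.
case: hmod => [[hU [hD hH]] rhu rdh rdu].
have lU : islin U by move=> a x y; exact: hU.
have lD : islin D by move=> a x y; exact: hD.
have sI := soundI hU hD hH rhu rdh rdu hhM.
set psi0 := psi`_0.
have hDU : forall m, D (U m) = s *: U (D m) + (s * psi0 - psi0) *: m.
  move=> m; have := sI _ _ (Idu r s phi) m; rewrite /= /c0 (conf0 hconf) => ->.
  done.
have hT : forall m, act U D H (Hterm psi) m = T U D psi0 m.
  by move=> m; rewrite /Hterm /= (sI _ _ (tpoly0 r s phi psi) m).
have hsurj : forall m, exists m', T U D psi0 m' = m.
  by move=> m; have [m' <-] := hHM m; exists m'; rewrite hT.
case: hsimple => [[m0 hm0] hsimp].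
have Tinj : forall m, T U D psi0 m = 0 -> m = 0.
  have hP : is_submodule U D H (fun m => T U D psi0 m = 0).
    split.
    - exact: (f0 (lT psi0 lU lD)).
    - by split=> [m n hm hn | c m hm]; rewrite ?(fD (lT psi0 lU lD)) ?(fZ (lT psi0 lU lD)) ?hm ?hn ?addr0 ?scaler0.
    - by move=> m hm; rewrite (TU lU hDU) hm (f0 lU) scaler0.
    - move=> m hm; have := DT lD hDU m; rewrite hm (f0 lD) => /esym/eqP.
      by rewrite scaler_eq0 (negbTE hs) => /eqP.
    - by move=> m _; rewrite hhM; exact: (f0 (lT psi0 lU lD)).
  case: (hsimp _ hP) => [h | h]; first exact: h.
  exfalso; apply: hm0; have [m' <-] := hsurj m0; exact: h.
have hnz : exists m : M, m != 0 by exists m0; apply/eqP.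
move=> t; split; last first.
  case=> l hl m; rewrite (sound hU hD hH rhu rdh rdu hl m).
  exact: (act_isum hU hD hH hhM l m).
move=> hann.
have [l hl] := NF_all r s phi t.
set N := (\max_(x <- l) maxn x.2.1 x.2.2).+1.
set P := [seq (i, j) | i <- iota 0 N, j <- iota 0 N].
have huP : uniq P.
  apply: allpairs_uniq; rewrite ?iota_uniq //; by move=> [? ?] [? ?] _ _.
have hlP : forall x, x \in l -> x.2 \in P.
  move=> x hx.
  have hle : (maxn x.2.1 x.2.2 < N)%N by rewrite ltnS; exact: (leq_bigmax_seq _ hx).
  case: x hx hle => c [i j] hx hle /=.
  apply/allpairsP; exists (i, j); rewrite !mem_iota /= !add0n.
  split => //; [exact: leq_ltn_trans (leq_maxl _ _) hle | exact: leq_ltn_trans (leq_maxr _ _) hle].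
have hg := group r s phi huP hlP.
set f := fun i j => coef l (i, j).
have hFF : forall m, FF U D N f m = 0.
  move=> m; rewrite -(hann m) (sI _ _ hl m) (sI _ _ hg m) act_tsum big_map /FF big_allpairs.
  have ei : iota 0 N = index_iota 0 N by rewrite /index_iota subn0.
  rewrite ei big_mkord; apply: eq_bigr => i _; rewrite big_mkord; apply: eq_bigr => j _.
  by rewrite act_mono.
have hz := indep lU lD hs hsroot hDU hsurj Tinj hnz hFF.
apply: eqI_ideal.
apply: (eqI_trans hl); apply: (eqI_trans hg).
apply: tsum0 => p /allpairsP [[i j] [hi hj ->]].
by move: hi hj; rewrite !mem_iota /= !add0n => hi hj; apply: hz.
Qed.
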